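(* If $R$ is an NJ-symmetric semiperiodic ring, then $R/J(R)$ is commutative.
   Context: Rings are associative with identity. $N(R)$ is the set of nilpotent elements, $J(R)$ the Jacobson radical, $Z(R)$ the center. $R$ is NJ-symmetric if for all $a,b,c\in R$, $abc\in N(R)$ implies $bac\in J(R)$. $R$ is semiperiodic if for each $a\in R\setminus (J(R)\cup Z(R))$ there exist positive integers $p,q$ of opposite parity with $a^q-a^p\in N(R)$. *)

(* Defs.v *)
From mathcomp Require Import all_boot all_algebra.
Set Implicit Arguments. Unset Strict Implicit. Unset Printing Implicit Defensive.
Import GRing.Theory.
Local Open Scope ring_scope.

(* Rings: associative with identity (possibly the zero ring, hence pzRingType). *)

Definition nilpotent_elt (R : pzRingType) (a : R) : Prop :=
  exists n : nat, a ^+ n = 0.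

Definition central (R : pzRingType) (a : R) : Prop :=
  forall x : R, a * x = x * a.

Definition left_ideal (R : pzRingType) (I : R -> Prop) : Prop :=
  [/\ I 0, (forall x y, I x -> I y -> I (x + y)), (forall x, I x -> I (- x))
    & (forall r x, I x -> I (r * x))].

Definition maximal_left_ideal (R : pzRingType) (M : R -> Prop) : Prop :=
  [/\ left_ideal M, ~ M 1 &
      forall I : R -> Prop, left_ideal I -> ~ I 1 ->
        (forall x, M x -> I x) -> forall x, I x -> M x].

Definition jacobson (R : pzRingType) (a : R) : Prop :=
  forall M : R -> Prop, maximal_left_ideal M -> M a.

Definition NJ_symmetric (R : pzRingType) : Prop :=
  forall a b c : R, nilpotent_elt (a * b * c) -> jacobson (b * a * c).

Definition semiperiodic (R : pzRingType) : Prop :=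
  forall a : R, ~ jacobson a -> ~ central a ->
    exists p q : nat, [/\ (0 < p)%N, (0 < q)%N, odd p != odd q
                        & nilpotent_elt (a ^+ q - a ^+ p)].

(* R/J(R) is commutative: (a+J)(b+J) = (b+J)(a+J) for all a b,
   i.e. ab - ba in J(R) *)
Definition quot_jacobson_commutative (R : pzRingType) : Prop :=
  forall a b : R, jacobson (a * b - b * a).

(* Main.v *)
From HB Require Import structures.
Require Import Defs.
From mathcomp Require Import all_boot all_algebra.
From mathcomp Require Import all_field.
From Stdlib Require Import Classical ClassicalEpsilon.
Set Implicit Arguments. Unset Strict Implicit. Unset Printing Implicit Defensive.
Import GRing.Theory.
Local Open Scope ring_scope.

Record sring (Q : nzRingType) (s : seq Q) : Prop := SRing {
  sr0 : 0 \in s; sr1 : 1 \in s;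
  srN : forall x, x \in s -> - x \in s;
  srD : forall x y, x \in s -> y \in s -> x + y \in s;
  srM : forall x y, x \in s -> y \in s -> x * y \in s;
  srdom : forall x y, x \in s -> y \in s -> x * y = 0 -> x = 0 \/ y = 0 }.

Section FinSub.
Variables (Q : nzRingType) (s : seq Q) (hs : sring s).
Let s0 := sr0 hs. Let s1 := sr1 hs. Let sN := srN hs. Let sD := srD hs. Let sM := srM hs.

Definition FSt of sring s : predArgType := seq_sub s.
Local Notation FS := (FSt hs).
HB.instance Definition _ := Finite.on FS.
Definition fzero : FS := SeqSub s0.
Definition fone : FS := SeqSub s1.
Definition fopp (a : FS) : FS := SeqSub (sN (ssvalP a)).
Definition fadd (a b : FS) : FS := SeqSub (sD (ssvalP a) (ssvalP b)).
Definition fmul (a b : FS) : FS := SeqSub (sM (ssvalP a) (ssvalP b)).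

Lemma faddA : associative fadd. Proof. by move=> *; apply: val_inj; rewrite /= addrA. Qed.
Lemma faddC : commutative fadd. Proof. by move=> *; apply: val_inj; rewrite /= addrC. Qed.
Lemma fadd0 : left_id fzero fadd. Proof. by move=> *; apply: val_inj; rewrite /= add0r. Qed.
Lemma faddN : left_inverse fzero fopp fadd. Proof. by move=> *; apply: val_inj; rewrite /= addNr. Qed.
HB.instance Definition _ := GRing.isZmodule.Build FS faddA faddC fadd0 faddN.
Lemma fmulA : associative fmul. Proof. by move=> *; apply: val_inj; rewrite /= mulrA. Qed.
Lemma fmul1 : left_id fone fmul. Proof. by move=> *; apply: val_inj; rewrite /= mul1r. Qed.
Lemma fmulr1 : right_id fone fmul. Proof. by move=> *; apply: val_inj; rewrite /= mulr1. Qed.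
Lemma fmulDl : left_distributive fmul fadd. Proof. by move=> *; apply: val_inj; rewrite /= mulrDl. Qed.
Lemma fmulDr : right_distributive fmul fadd. Proof. by move=> *; apply: val_inj; rewrite /= mulrDr. Qed.
Lemma f1neq0 : fone != fzero.
Proof. by apply/eqP=> /(congr1 val) /= /eqP; rewrite oner_eq0. Qed.
HB.instance Definition _ := GRing.Zmodule_isNzRing.Build FS fmulA fmul1 fmulr1 fmulDl fmulDr f1neq0.

Definition funit : pred FS := fun a => [exists b : FS, (b * a == 1) && (a * b == 1)].
Definition finv (a : FS) : FS :=
  if [pick b : FS | (b * a == 1) && (a * b == 1)] is Some b then b else a.
Lemma fmulVr : {in funit, left_inverse 1 finv *%R}.
Proof.
move=> a; rewrite /funit /finv => /existsP[b hb].
by case: pickP => [c /andP[/eqP -> _]|/(_ b)]; rewrite ?hb.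
Qed.
Lemma fdivrr : {in funit, right_inverse 1 finv *%R}.
Proof.
move=> a; rewrite /funit /finv => /existsP[b hb].
by case: pickP => [c /andP[_ /eqP ->]|/(_ b)]; rewrite ?hb.
Qed.
Lemma funitP : forall x y : FS, y * x = 1 /\ x * y = 1 -> funit x.
Proof. by move=> x y [h1 h2]; apply/existsP; exists y; rewrite h1 h2 !eqxx. Qed.
Lemma finv_out : {in [predC funit], finv =1 id}.
Proof.
move=> a; rewrite inE /funit /finv => /existsP hn.
by case: pickP => // c hc; case: hn; exists c.
Qed.
HB.instance Definition _ := GRing.NzRing_hasMulInverse.Build FS fmulVr fdivrr funitP finv_out.

Lemma FS_dom : GRing.integral_domain_axiom FS.
Proof.
move=> a b hab; have : val a * val b = 0 by have := congr1 val hab.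
by case/(srdom hs (ssvalP a) (ssvalP b))=> h; apply/orP; [left|right]; apply/eqP/val_inj.
Qed.

Lemma FS_comm : forall a b : FS, a * b = b * a.
Proof. exact: (@finDomain_mulrC FS FS_dom). Qed.

HB.instance Definition _ := GRing.PzRing_hasCommutativeMul.Build FS FS_comm.
HB.instance Definition _ := GRing.ComUnitRing_isIntegral.Build FS FS_dom.
HB.instance Definition _ := GRing.UnitRing_isField.Build FS (finDomain_field FS_dom).

Lemma FS_commQ a b : a \in s -> b \in s -> a * b = b * a.
Proof. by move=> ha hb; have := congr1 (@ssval _ s) (@FS_comm (SeqSub ha) (SeqSub hb)). Qed.

End FinSub.

Section Char2.
Variable Q : nzRingType.
Hypothesis h2 : (1 + 1 : Q) = 0.
Lemma c2_addxx (z : Q) : z + z = 0.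
Proof. by rewrite -[z]mulr1 -mulrDr h2 mulr0. Qed.
Lemma c2_opp (z : Q) : - z = z.
Proof. by apply/eqP; rewrite eq_sym -subr_eq0 opprK c2_addxx. Qed.
Lemma c2_natb (b1 b2 : bool) : (b1 : nat)%:R + (b2 : nat)%:R = ((b1 (+) b2) : nat)%:R :> Q.
Proof. by case: b1; case: b2; rewrite /= ?addr0 ?add0r. Qed.
End Char2.

Section WithX.
Variables (Q : nzRingType) (x : Q) (m : nat).
Hypotheses (m_gt0 : (0 < m)%N) (hxm : x ^+ m = 1) (h2 : (1 + 1 : Q) = 0).
Hypothesis dom : forall x y : Q, x * y = 0 -> x = 0 \/ y = 0.

Definition fx (X : {set 'I_m}) : Q := \sum_(i < m) ((i \in X) : nat)%:R * x ^+ i.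
Definition Fs := [seq fx X | X : {set 'I_m}].

Lemma inFs z : z \in Fs -> exists X, z = fx X.
Proof. by case/imageP=> X _ ->; exists X. Qed.
Lemma fx_in X : fx X \in Fs.
Proof. exact: image_f. Qed.

Lemma Fs_add z1 z2 : z1 \in Fs -> z2 \in Fs -> z1 + z2 \in Fs.
Proof.
move=> /inFs[X ->] /inFs[Y ->].
have -> : fx X + fx Y = fx [set i | (i \in X) (+) (i \in Y)].
  rewrite /fx -big_split /=; apply: eq_bigr => i _.
  by rewrite -mulrDl c2_natb // inE.
exact: fx_in.
Qed.

Lemma Fs_pow k : x ^+ k \in Fs.
Proof.
have hk : (k %% m < m)%N by rewrite ltn_mod.
have -> : x ^+ k = fx [set Ordinal hk].
  rewrite /fx (bigD1 (Ordinal hk)) //= inE eqxx mul1r big1 ?addr0.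
    by rewrite {1}(divn_eq k m) exprD mulnC exprM hxm expr1n mul1r.
  by move=> i hi; rewrite inE (negbTE hi) mul0r.
exact: fx_in.
Qed.

Lemma Fs_0 : 0 \in Fs.
Proof.
have -> : (0 : Q) = fx set0 by rewrite /fx big1 // => i _; rewrite inE mul0r.
exact: fx_in.
Qed.

Lemma Fs_1 : 1 \in Fs.
Proof. by rewrite -(expr0 x) Fs_pow. Qed.

Lemma Fs_opp z : z \in Fs -> - z \in Fs.
Proof. by rewrite c2_opp. Qed.

Lemma Fs_sum (I : finType) (P : pred I) (F : I -> Q) :
  (forall i, P i -> F i \in Fs) -> \sum_(i | P i) F i \in Fs.
Proof. by move=> h; apply: (big_ind (fun z => z \in Fs)) => //; [exact: Fs_0 | exact: Fs_add]. Qed.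

Lemma Fs_term (b : bool) k : (b : nat)%:R * x ^+ k \in Fs.
Proof. by case: b; rewrite ?mul1r ?mul0r ?Fs_pow ?Fs_0. Qed.

Lemma Fs_mul z1 z2 : z1 \in Fs -> z2 \in Fs -> z1 * z2 \in Fs.
Proof.
move=> /inFs[X ->] /inFs[Y ->]; rewrite /fx mulr_suml; apply: Fs_sum => i _.
rewrite mulr_sumr; apply: Fs_sum => j _.
rewrite !mulr_natl mulrnAl mulrnAr -mulrnA -exprD.
have -> : (((j \in Y) : nat) * ((i \in X) : nat) = ((i \in X) && (j \in Y) : nat))%N.
  by case: (i \in X); case: (j \in Y).
by rewrite -mulr_natl Fs_term.
Qed.

Lemma Fs_commx z : z \in Fs -> x * z = z * x.
Proof.
move=> /inFs[X ->]; rewrite /fx mulr_sumr mulr_suml; apply: eq_bigr => i _.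
by rewrite !mulr_natl mulrnAl mulrnAr -exprS -exprSr.
Qed.

Lemma Fs_x : x \in Fs.
Proof. by rewrite -[x]expr1 Fs_pow. Qed.

Lemma Fs_exp z k : z \in Fs -> z ^+ k \in Fs.
Proof. by move=> hz; elim: k => [|k IH]; rewrite ?expr0 ?Fs_1 // exprS Fs_mul. Qed.

Definition sringF : sring Fs :=
  SRing Fs_0 Fs_1 Fs_opp Fs_add Fs_mul (fun a b _ _ => @dom a b).

Section Conj.
Variables (w x' : Q).
Hypotheses (hw : w * x = x' * w) (hx' : x' \in Fs).

Lemma conj_pow i : w * x ^+ i = x' ^+ i * w.
Proof.
elim: i => [|i IH]; first by rewrite !expr0 mulr1 mul1r.
by rewrite exprS mulrA hw -mulrA IH mulrA -exprS.
Qed.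

Lemma conj_Fs z : z \in Fs -> exists2 z', z' \in Fs & w * z = z' * w.
Proof.
move=> /inFs[X ->]; exists (\sum_(i < m) ((i \in X) : nat)%:R * x' ^+ i).
  by apply: Fs_sum => i _; case: (i \in X); rewrite ?mul1r ?mul0r ?Fs_exp ?Fs_0.
rewrite /fx mulr_sumr mulr_suml; apply: eq_bigr => i _.
by rewrite !mulr_natl mulrnAr mulrnAl conj_pow.
Qed.

Lemma conj_Fs_pow j z : z \in Fs -> exists2 z', z' \in Fs & w ^+ j * z = z' * w ^+ j.
Proof.
elim: j z => [|j IH] z hz; first by exists z; rewrite ?expr0 ?mulr1 ?mul1r.
have [z1 hz1 e1] := conj_Fs hz.
have [z2 hz2 e2] := IH z1 hz1.
by exists z2 => //; rewrite exprSr -mulrA e1 mulrA e2 -mulrA -exprSr.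
Qed.
End Conj.

End WithX.

Definition ad (Q : nzRingType) (u v : Q) := u * v - v * u.

Lemma adad (Q : nzRingType) (h2 : (1 + 1 : Q) = 0) (u v : Q) :
  ad u (ad u v) = ad (u ^+ 2) v.
Proof.
rewrite /ad !mulrBr !mulrBl !mulrA -expr2 -[v * u * u]mulrA -expr2.
rewrite !(c2_opp h2) -!addrA; congr (_ + _).
by rewrite addrA c2_addxx // add0r.
Qed.

Lemma iter_ad (Q : nzRingType) (h2 : (1 + 1 : Q) = 0) (u v : Q) k :
  iter (2 ^ k)%N (ad u) v = ad (u ^+ (2 ^ k)%N) v.
Proof.
elim: k v => [|k IH] v; first by rewrite expn0 /= expr1.
rewrite expnSr muln2 -addnn iterD IH IH adad // -exprM.
by rewrite muln2 addnn.
Qed.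

Section Eig.
Variables (Q : nzRingType) (x : Q) (m : nat).
Hypotheses (m_gt0 : (0 < m)%N) (hxm : x ^+ m = 1) (h2 : (1 + 1 : Q) = 0).
Hypothesis dom : forall x y : Q, x * y = 0 -> x = 0 \/ y = 0.

Local Notation Fs := (Fs x m).
Local Notation FT := (FSt (sringF m_gt0 hxm h2 dom)).
Definition io (c : FT) : Q := ssval c.

Lemma ioD a b : io (a + b) = io a + io b. Proof. by []. Qed.
Lemma ioM a b : io (a * b) = io a * io b. Proof. by []. Qed.
Lemma io0 : io 0 = 0. Proof. by []. Qed.
Lemma io1 : io 1 = 1. Proof. by []. Qed.
Lemma ioN a : io (- a) = - io a. Proof. by []. Qed.
Lemma ioX a n : io (a ^+ n) = io a ^+ n.
Proof. by elim: n => [|n IH]; rewrite ?expr0 ?io1 // !exprS ioM IH. Qed.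
Lemma ion n : io n%:R = n%:R.
Proof. by elim: n => [|n IH]; rewrite ?io0 // !mulrS ioD IH io1. Qed.
Lemma io_inj : injective io.
Proof. by move=> a b h; apply: val_inj. Qed.
Lemma io_in a : io a \in Fs. Proof. exact: ssvalP. Qed.
Lemma io_comm a : x * io a = io a * x.
Proof. exact: (Fs_commx (io_in a)). Qed.

Definition q := #|FT|.

Lemma q_pow2 : exists k, q = (2 ^ k)%N.
Proof.
have pc : (2 \in [pchar FT])%N.
  rewrite inE /=; apply/eqP/io_inj; rewrite ion io0.
  by rewrite -h2 -addn1 natrD.
by exists (logn 2 #|FT|); exact: (card_pprimeChar pc).
Qed.

Lemma xq : x ^+ q = x.
Proof.
have := expf_card (SeqSub (Fs_x m_gt0 hxm) : FT).
by move/(congr1 io); rewrite ioX.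
Qed.

Lemma iter_q v : iter q (ad x) v = ad x v.
Proof. by have [k hk] := q_pow2; rewrite hk iter_ad // -hk xq. Qed.

Local Notation adx := (ad x).

Lemma ad_lin a v : adx (io a * v) = io a * adx v.
Proof. by rewrite /ad mulrBr !mulrA io_comm. Qed.

Lemma iter_lin a v i : iter i adx (io a * v) = io a * iter i adx v.
Proof. by elim: i => [|i IH] //=; rewrite IH ad_lin. Qed.

Lemma adD u v : adx (u + v) = adx u + adx v.
Proof. by rewrite /ad mulrDr mulrDl opprD addrACA. Qed.

Lemma ad0 : adx 0 = 0.
Proof. by rewrite /ad mulr0 mul0r subr0. Qed.

Lemma ad_sum (I : finType) (F : I -> Q) : adx (\sum_i F i) = \sum_i adx (F i).
Proof. by rewrite /ad mulr_sumr mulr_suml -sumrB. Qed.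

Definition Op (p : {poly FT}) (v : Q) :=
  \sum_(i < size p) io p`_i * iter i adx v.

Lemma OpE N (p : {poly FT}) v : (size p <= N)%N -> Op p v = \sum_(i < N) io p`_i * iter i adx v.
Proof.
move=> hN; rewrite /Op (big_ord_widen N (fun i => io p`_i * iter i adx v) hN).
rewrite big_mkcond /=; apply: eq_bigr => i _.
by case: ifP => // /negbT; rewrite -leqNgt => h; rewrite nth_default // io0 mul0r.
Qed.

Lemma OpD p r v : Op (p + r) v = Op p v + Op r v.
Proof.
pose N := maxn (size p) (size r).
rewrite !(OpE (N := N)) ?leq_maxl ?leq_maxr ?(leq_trans (size_polyD _ _)) //.
by rewrite -big_split; apply: eq_bigr => i _; rewrite coefD ioD mulrDl.
Qed.

Lemma OpN p v : Op (- p) v = - Op p v.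
Proof.
rewrite /Op size_polyN -sumrN; apply: eq_bigr => i _.
by rewrite coefN ioN mulNr.
Qed.

Lemma Op0 v : Op 0 v = 0.
Proof. by rewrite /Op size_poly0 big_ord0. Qed.

Lemma Op1 v : Op 1 v = v.
Proof. by rewrite /Op size_poly1 big_ord1 coefC /=; rewrite mul1r. Qed.

Lemma OpC c p v : Op (c%:P * p) v = io c * Op p v.
Proof.
rewrite mul_polyC (OpE (N := size p)) ?size_scale_leq // /Op mulr_sumr.
by apply: eq_bigr => i _; rewrite coefZ ioM mulrA.
Qed.

Lemma OpXr p v : Op (p * 'X) v = Op p (adx v).
Proof.
rewrite (OpE (N := (size p).+1)); last first.
  by apply: leq_trans (size_polyMleq _ _) _; rewrite size_polyX addn2.
rewrite big_ord_recl coefMX /= mul0r add0r /Op.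
by apply: eq_bigr => i _; rewrite coefMX /bump /= add0n -iterS iterSr.
Qed.

Lemma Op_ad p v : Op p (adx v) = adx (Op p v).
Proof.
rewrite /Op ad_sum; apply: eq_bigr => i _.
by rewrite ad_lin -iterSr -iterS.
Qed.

Lemma OpM p r v : Op (p * r) v = Op p (Op r v).
Proof.
elim/poly_ind: p v => [|p c IH] v; first by rewrite mul0r !Op0.
rewrite mulrDl -mulrA -(commr_polyX r) mulrA OpD OpXr IH OpC.
by rewrite OpD OpXr -Op_ad -[c%:P]mulr1 OpC Op1.
Qed.

Lemma OpXn n v : Op ('X^n) v = iter n adx v.
Proof.
elim: n v => [|n IH] v; first by rewrite expr0 Op1.
by rewrite exprSr OpXr IH iterSr.
Qed.

Lemma OpXq v : Op ('X^q - 'X) v = 0.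
Proof. by rewrite OpD OpN OpXn -(expr1 'X) OpXn iter_q /= subrr. Qed.

Lemma OpXc c v : Op ('X - c%:P) v = adx v - io c * v.
Proof. by rewrite OpD OpN -(expr1 'X) OpXn -[c%:P]mulr1 OpC Op1. Qed.

Lemma eig_seq (r : seq FT) v :
  Op (\prod_(l <- r | l != 0) ('X - l%:P)) v = 0 -> v != 0 ->
  exists2 l : FT, l != 0 & exists2 w, w != 0 & adx w = io l * w.
Proof.
elim: r v => [|a r IH] v; first by rewrite big_nil Op1 => ->; rewrite eqxx.
rewrite big_cons; case: ifP => [ha|_]; last exact: IH.
rewrite OpM; have [u0|unz] := eqVneq (Op (\prod_(l <- r | l != 0) ('X - l%:P)) v) 0.
  by move=> _; apply: IH.
move=> h _; exists a => //; exists (Op (\prod_(l <- r | l != 0) ('X - l%:P)) v) => //.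
by apply/eqP; rewrite -subr_eq0 -OpXc h.
Qed.

Lemma eig y : adx y != 0 ->
  exists2 l : FT, l != 0 & exists2 w, w != 0 & adx w = io l * w.
Proof.
move=> hy; apply: (eig_seq (r := index_enum FT) (v := adx y)) => //.
have := OpXq y; rewrite finField_genPoly (bigD1 0) //= subr0.
by rewrite mulrC OpM -(expr1 'X) OpXn.
Qed.

End Eig.

Section WithW.
Variables (Q : nzRingType) (x : Q) (m : nat).
Hypotheses (m_gt0 : (0 < m)%N) (hxm : x ^+ m = 1) (h2 : (1 + 1 : Q) = 0).
Hypothesis dom : forall x y : Q, x * y = 0 -> x = 0 \/ y = 0.
Variables (w x' : Q) (n : nat).
Hypotheses (n_gt0 : (0 < n)%N) (hwn : w ^+ n = 1) (hw : w * x = x' * w) (hx' : x' \in Fs x m).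

Local Notation Fs := (Fs x m).
Local Notation FT := (FSt (sringF m_gt0 hxm h2 dom)).
Local Notation io := (@io Q x m m_gt0 hxm h2 dom).

Definition ga (g : {ffun 'I_n -> FT}) : Q := \sum_(j < n) io (g j) * w ^+ j.
Definition As := [seq ga g | g : {ffun 'I_n -> FT}].

Lemma inAs z : z \in As -> exists g, z = ga g.
Proof. by case/imageP=> g _ ->; exists g. Qed.
Lemma ga_in g : ga g \in As.
Proof. exact: image_f. Qed.

Lemma As_term c k : c \in Fs -> c * w ^+ k \in As.
Proof.
move=> hc; have hk : (k %% n < n)%N by rewrite ltn_mod.
pose c' : FT := SeqSub hc.
have -> : c * w ^+ k = ga [ffun j => if j == Ordinal hk then c' else 0].
  rewrite /ga (bigD1 (Ordinal hk)) //= ffunE eqxx big1 ?addr0.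
    by rewrite {1}(divn_eq k n) exprD mulnC exprM hwn expr1n mul1r.
  by move=> i hi; rewrite ffunE (negbTE hi) io0 mul0r.
exact: ga_in.
Qed.

Lemma As_add z1 z2 : z1 \in As -> z2 \in As -> z1 + z2 \in As.
Proof.
move=> /inAs[g ->] /inAs[h ->].
have -> : ga g + ga h = ga [ffun j => g j + h j].
  by rewrite /ga -big_split; apply: eq_bigr => j _; rewrite ffunE ioD mulrDl.
exact: ga_in.
Qed.

Lemma As_0 : 0 \in As.
Proof. by rewrite -(mul0r (w ^+ 0)) As_term // Fs_0. Qed.

Lemma As_1 : 1 \in As.
Proof. by rewrite -(mulr1 1) -{2}(expr0 w) As_term // Fs_1. Qed.

Lemma As_opp z : z \in As -> - z \in As.
Proof. by rewrite c2_opp. Qed.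

Lemma As_sum (I : finType) (P : pred I) (F : I -> Q) :
  (forall i, P i -> F i \in As) -> \sum_(i | P i) F i \in As.
Proof. by move=> h; apply: (big_ind (fun z => z \in As)) => //; [exact: As_0 | exact: As_add]. Qed.

Lemma As_mul z1 z2 : z1 \in As -> z2 \in As -> z1 * z2 \in As.
Proof.
move=> /inAs[g ->] /inAs[h ->]; rewrite /ga mulr_suml; apply: As_sum => i _.
rewrite mulr_sumr; apply: As_sum => j _.
have [z hz e] := conj_Fs_pow m_gt0 hxm h2 hw hx' i (io_in (h j)).
rewrite -mulrA [w ^+ i * _]mulrA e -mulrA -exprD mulrA.
by apply: As_term; apply: Fs_mul => //; apply: io_in.
Qed.

Definition sringA : sring As :=
  SRing As_0 As_1 As_opp As_add As_mul (fun a b _ _ => @dom a b).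

Lemma xw_comm : x * w = w * x.
Proof.
apply: (FS_commQ sringA).
  by rewrite -[x]mulr1 -(expr0 w) As_term // Fs_x.
by rewrite -[w]mul1r -(expr1 w) As_term // Fs_1.
Qed.
End WithW.

Section Core.
Variable Q : nzRingType.
Hypothesis dom : forall x y : Q, x * y = 0 -> x = 0 \/ y = 0.
Hypothesis tor : forall x : Q, (forall y, x * y = y * x) \/ exists2 m, odd m & x ^+ m = 1.

Theorem core_comm (x y : Q) : x * y = y * x.
Proof.
apply/eqP; apply: contraT => hxy.
have [cx|[m om hxm]] := tor x; first by rewrite cx eqxx in hxy.
have m_gt0 : (0 < m)%N by rewrite odd_gt0.
have h2 : (1 + 1 : Q) = 0.
  have [cx|[m' om' hxm']] := tor (- x).
    by move: hxy; rewrite -[x]opprK mulNr mulrN cx eqxx.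
  have e1 : (- x) ^+ (m' * m) = 1 by rewrite exprM hxm' expr1n.
  rewrite exprNn -signr_odd oddM om om' /= expr1 mulnC exprM hxm expr1n mulr1 in e1.
  by rewrite -{2}e1 subrr.
have hy : ad x y != 0 by rewrite /ad subr_eq0.
have [l lnz [w wnz hw]] := eig m_gt0 hxm h2 dom hy.
have lw : io l * w != 0.
  apply/eqP => /dom[] => [/eqP|/eqP]; last by rewrite (negbTE wnz).
  by rewrite -(io0 m_gt0 hxm h2 dom) => /eqP /io_inj /eqP; rewrite (negbTE lnz).
have [cw|[n on hwn]] := tor w.
  by move: lw; rewrite -hw /ad cw subrr eqxx.
have n_gt0 : (0 < n)%N by rewrite odd_gt0.
pose x' := x - io l.
have hw' : w * x = x' * w.
  by rewrite /x' mulrBl -hw /ad opprB addrC subrK.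
have hx' : x' \in Fs x m by rewrite Fs_add ?Fs_opp ?io_in ?Fs_x.
have := xw_comm m_gt0 hxm h2 dom n_gt0 hwn hw' hx'.
by move/eqP; rewrite -subr_eq0 -/(ad x w) hw (negbTE lw).
Qed.
End Core.

Record tideal (R : pzRingType) (P : R -> Prop) : Prop := TIdeal {
  ti0 : P 0;
  tiD : forall x y, P x -> P y -> P (x + y);
  tiN : forall x, P x -> P (- x);
  tiL : forall r x, P x -> P (r * x);
  tiR : forall r x, P x -> P (x * r);
  ti1 : ~ P 1 }.

Section Quot.
Variables (R : pzRingType) (P : R -> Prop) (hP : tideal P).

Definition Pb (x : R) : bool := if excluded_middle_informative (P x) then true else false.
Lemma PbP x : reflect (P x) (Pb x).
Proof. by rewrite /Pb; case: excluded_middle_informative => h; constructor. Qed.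

Lemma PB x y : P x -> P y -> P (x - y).
Proof. by move=> hx hy; apply: (tiD hP) => //; apply: (tiN hP). Qed.

Lemma ex_rep x : exists y, Pb (x - y).
Proof. by exists x; apply/PbP; rewrite subrr; apply: (ti0 hP). Qed.
Definition canon x := xchoose (ex_rep x).
Lemma canonP x : P (x - canon x).
Proof. exact/PbP/(xchooseP (ex_rep x)). Qed.
Lemma canon_eq x y : P (x - y) -> canon x = canon y.
Proof.
move=> hxy; apply: eq_xchoose => z; apply/PbP/PbP => h.
  by have := PB h hxy; rewrite opprB addrC addrA subrK.
by have := tiD hP hxy h; rewrite addrA subrK.
Qed.
Lemma canonK x : canon (canon x) = canon x.
Proof. by apply: canon_eq; rewrite -opprB; apply: (tiN hP); apply: canonP. Qed.

Definition QT := {x : R | canon x == x}.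
HB.instance Definition _ := Choice.on QT.

Definition pi (x : R) : QT := exist _ (canon x) (introT eqP (canonK x)).
Lemma piK (a : QT) : pi (val a) = a.
Proof. by apply: val_inj => /=; apply/eqP/(valP a). Qed.
Lemma pi_eqP x y : pi x = pi y <-> P (x - y).
Proof.
split=> [/(congr1 val) /= e|h]; last by apply: val_inj; apply: canon_eq.
by have := PB (canonP x) (canonP y); rewrite e opprB addrA subrK.
Qed.

Definition qzero := pi 0.
Definition qone := pi 1.
Definition qadd (a b : QT) := pi (val a + val b).
Definition qopp (a : QT) := pi (- val a).
Definition qmul (a b : QT) := pi (val a * val b).

Lemma valpi x : P (val (pi x) - x).
Proof. by rewrite -opprB; apply: (tiN hP); apply: canonP. Qed.

Lemma pi_add x y : qadd (pi x) (pi y) = pi (x + y).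
Proof.
apply/pi_eqP; rewrite opprD addrACA; apply: (tiD hP); exact: valpi.
Qed.
Lemma pi_opp x : qopp (pi x) = pi (- x).
Proof. by apply/pi_eqP; rewrite opprK addrC -opprB; apply: (tiN hP); apply: valpi. Qed.
Lemma pi_mul x y : qmul (pi x) (pi y) = pi (x * y).
Proof.
apply/pi_eqP.
have -> : val (pi x) * val (pi y) - x * y =
  (val (pi x) - x) * val (pi y) + x * (val (pi y) - y).
  by rewrite mulrBl mulrBr addrA subrK.
by apply: (tiD hP); [apply: (tiR hP); apply: valpi | apply: (tiL hP); apply: valpi].
Qed.

Lemma qaddA : associative qadd.
Proof. by move=> a b c; rewrite -[a]piK -[b]piK -[c]piK !pi_add addrA. Qed.
Lemma qaddC : commutative qadd.
Proof. by move=> a b; rewrite -[a]piK -[b]piK !pi_add addrC. Qed.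
Lemma qadd0 : left_id qzero qadd.
Proof. by move=> a; rewrite -[a]piK /qzero pi_add add0r. Qed.
Lemma qaddN : left_inverse qzero qopp qadd.
Proof. by move=> a; rewrite -[a]piK pi_opp pi_add addNr. Qed.
HB.instance Definition _ := GRing.isZmodule.Build QT qaddA qaddC qadd0 qaddN.
Lemma qmulA : associative qmul.
Proof. by move=> a b c; rewrite -[a]piK -[b]piK -[c]piK !pi_mul mulrA. Qed.
Lemma qmul1 : left_id qone qmul.
Proof. by move=> a; rewrite -[a]piK /qone pi_mul mul1r. Qed.
Lemma qmulr1 : right_id qone qmul.
Proof. by move=> a; rewrite -[a]piK /qone pi_mul mulr1. Qed.
Lemma qmulDl : left_distributive qmul qadd.
Proof. by move=> a b c; rewrite -[a]piK -[b]piK -[c]piK !(pi_add, pi_mul) mulrDl. Qed.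
Lemma qmulDr : right_distributive qmul qadd.
Proof. by move=> a b c; rewrite -[a]piK -[b]piK -[c]piK !(pi_add, pi_mul) mulrDr. Qed.
Lemma q1neq0 : qone != qzero.
Proof. by apply/eqP => /pi_eqP; rewrite subr0; apply: (ti1 hP). Qed.
HB.instance Definition _ := GRing.Zmodule_isNzRing.Build QT qmulA qmul1 qmulr1 qmulDl qmulDr q1neq0.

Lemma piD x y : pi (x + y) = pi x + pi y. Proof. by rewrite -pi_add. Qed.
Lemma piM x y : pi (x * y) = pi x * pi y. Proof. by rewrite -pi_mul. Qed.
Lemma piN x : pi (- x) = - pi x. Proof. by rewrite -pi_opp. Qed.
Lemma pi1 : pi 1 = 1. Proof. by []. Qed.
Lemma pi0 : pi 0 = 0. Proof. by []. Qed.
Lemma piB x y : pi (x - y) = pi x - pi y. Proof. by rewrite piD piN. Qed.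
Lemma piX x n : pi (x ^+ n) = pi x ^+ n.
Proof. by elim: n => [|n IH]; rewrite ?expr0 ?pi1 // !exprS piM IH. Qed.
Lemma pi_eq0 x : pi x = 0 <-> P x.
Proof. by rewrite -pi0; split => [/pi_eqP|h]; rewrite ?subr0 //; apply/pi_eqP; rewrite subr0. Qed.
Lemma pi_surj (a : QT) : exists x, a = pi x.
Proof. by exists (val a); rewrite piK. Qed.
End Quot.

Section Jac.
Variable R : pzRingType.

Lemma J0 : jacobson (0 : R).
Proof. by move=> M [[h0 _ _ _] _ _]. Qed.
Lemma JD (x y : R) : jacobson x -> jacobson y -> jacobson (x + y).
Proof. by move=> hx hy M hM; case: (hM) => [[_ hD _ _] _ _]; apply: hD; [apply: hx|apply: hy]. Qed.
Lemma JL (r x : R) : jacobson x -> jacobson (r * x).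
Proof. by move=> hx M hM; case: (hM) => [[_ _ _ hL] _ _]; apply: hL; apply: hx. Qed.

Lemma JR_M (x : R) M : jacobson x -> maximal_left_ideal M -> forall r, M (x * r).
Proof.
move=> hx hM r; case: (hM) => [[h0 hD hN hL] h1 hmax].
case: (classic (M r)) => [hr|hr]; first by apply: hL.
pose M' y := M (y * r).
suff : maximal_left_ideal M' by move/hx.
split.
- split; rewrite /M' ?mul0r //.
  + by move=> a b ha hb; rewrite mulrDl; apply: hD.
  + by move=> a ha; rewrite mulNr; apply: hN.
  + by move=> s a ha; rewrite -mulrA; apply: hL.
- by rewrite /M' mul1r.
- move=> I [i0 iD iN iL] i1 hsub z hz; rewrite /M'.
  apply: NNPP => hzr.
  pose I2 y := exists i m0, [/\ I i, M m0 & y = i * r + m0].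
  have hI2 : left_ideal I2.
    split.
    + by exists 0, 0; rewrite mul0r addr0.
    + move=> a b [i [m0 [hi hm ->]]] [j [m1 [hj hm1 ->]]].
      exists (i + j), (m0 + m1); split; [exact: iD | exact: hD |].
      by rewrite mulrDl addrACA.
    + move=> a [i [m0 [hi hm ->]]]; exists (- i), (- m0); split; [exact: iN | exact: hN |].
      by rewrite mulNr opprD.
    + move=> s a [i [m0 [hi hm ->]]]; exists (s * i), (s * m0); split; [exact: iL | exact: hL |].
      by rewrite mulrDr mulrA.
  case: (classic (I2 1)) => [[i [m0 [hi hm e]]]|n1].
    apply: i1; have : I (1 - r * i).
      apply: hsub; rewrite /M'.
      have -> : (1 - r * i) * r = r * m0.
        have e2 : i * r = 1 - m0 by rewrite e addrK.
        by rewrite mulrBl mul1r -mulrA e2 mulrBr mulr1 opprB addrC subrK.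
      exact: hL.
    by move=> h; have := iD _ _ h (iL r _ hi); rewrite subrK.
  apply: hzr; apply: (hmax I2 hI2 n1) => [y hy|].
    by exists 0, y; rewrite mul0r add0r.
  by exists z, 0; rewrite addr0.
Qed.

Lemma nilJ (NJ : NJ_symmetric R) (c : R) : nilpotent_elt c -> jacobson c.
Proof. by move=> h; have := NJ 1 1 c; rewrite !mul1r; apply. Qed.

End Jac.

Lemma pow_form (R : pzRingType) (a : R) m : (0 < m)%N -> forall K,
  exists2 c, GRing.comm a c & (1 - a ^+ m) ^+ K = 1 - a * c.
Proof.
move=> m_gt0; elim=> [|K [c hc e]]; first by exists 0; rewrite ?expr0 ?mulr0 ?subr0 //; exact: commr0.
exists (a ^+ m.-1 + c - c * a ^+ m).
  apply: commrD; first apply: commrD; [exact: commrX (commr_refl a) | exact: hc |].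
  by apply: commrN; apply: commrM => //; apply: commrX (commr_refl a).
rewrite exprSr e mulrBl mul1r !mulrBr mulr1 mulrDr -exprS prednK // mulrA.
by rewrite opprB !opprD opprK !addrA addrAC.
Qed.

Lemma nil_opp (R : pzRingType) (t : R) : nilpotent_elt t -> nilpotent_elt (- t).
Proof. by case=> n hn; exists n; rewrite exprNn hn mulr0. Qed.

Section Idem.
Variables (R : pzRingType) (a c : R) (N : nat).
Hypotheses (hac : GRing.comm a c) (hN : a ^+ N = a ^+ N * (a * c)).
Let z := a * c.
Let E := z ^+ N.
Lemma haz : GRing.comm a z. Proof. by apply: commrM => //; exact: commr_refl. Qed.
Lemma hcz : GRing.comm c z.
Proof. by apply: commrM; [exact: commr_sym | exact: commr_refl]. Qed.
Lemma aNz j : a ^+ N * z ^+ j = a ^+ N.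
Proof. by elim: j => [|j IH]; rewrite ?expr0 ?mulr1 // exprSr mulrA IH -hN. Qed.
Lemma Edef : E = a ^+ N * c ^+ N.
Proof. by rewrite /E /z exprMn_comm. Qed.
Lemma EE : E * E = E.
Proof.
rewrite {2}Edef mulrA.
have -> : E * a ^+ N = a ^+ N * E by apply: commr_sym; apply: commrX; apply: commr_sym; apply: commrX; apply: commr_sym; exact: haz.
by rewrite /E aNz -Edef.
Qed.
Lemma zE : z * E = E.
Proof.
rewrite Edef mulrA.
have -> : z * a ^+ N = a ^+ N * z by apply: commrX; apply: commr_sym; exact: haz.
by rewrite -hN.
Qed.
Lemma Ea : E * a = a * E.
Proof. by apply: commr_sym; apply: commrX; exact: haz. Qed.
Lemma nil_a1E : nilpotent_elt (a * (1 - E)).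
Proof.
exists N.+1; rewrite exprMn_comm; last by apply: commrB; [exact: commr1 | exact: commr_sym Ea].
have idem j : (1 - E) ^+ j.+1 = 1 - E.
  elim: j => [|j IH]; first by rewrite expr1.
  by rewrite exprS IH mulrBl mul1r mulrBr mulr1 EE subrr subr0.
by rewrite idem exprS -mulrA mulrBr mulr1 /E aNz subrr mulr0.
Qed.
End Idem.

Section Main.
Variables (R : pzRingType) (NJ : NJ_symmetric R) (SP : semiperiodic R).
Variables (M : R -> Prop) (hM : maximal_left_ideal M).

Definition PM (z : R) := forall r, M (z * r).

Lemma tidealPM : tideal PM.
Proof.
case: (hM) => [[h0 hD hN hL] h1 hmax]; split.
- by move=> r; rewrite mul0r.
- by move=> x y hx hy r; rewrite mulrDl; apply: hD.
- by move=> x hx r; rewrite mulNr; apply: hN.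
- by move=> s x hx r; rewrite -mulrA; apply: hL.
- by move=> s x hx r; rewrite -mulrA.
- by move=> h; apply: h1; have := h 1; rewrite mulr1.
Qed.

Lemma J_PM x : jacobson x -> PM x.
Proof. by move=> hx; apply: JR_M. Qed.

Lemma nil_PM x : nilpotent_elt x -> PM x.
Proof. by move=> h; apply: J_PM; apply: nilJ. Qed.

Lemma E_dich (E : R) : (forall x, jacobson ((1 - E) * x * E)) -> PM E \/ PM (1 - E).
Proof.
move=> hE; case: (classic (PM E)) => [h|h]; [by left | right].
case: (not_all_ex_not _ _ h) => r0 hr0.
case: (hM) => [[h0 hD hN hL] h1 hmax].
pose I3 y := exists u m0, M m0 /\ y = u * (E * r0) + m0.
have hI3 : left_ideal I3.
  split.
  + by exists 0, 0; rewrite mul0r addr0.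
  + move=> a b [u [m0 [hm ->]]] [v [m1 [hm1 ->]]].
    by exists (u + v), (m0 + m1); split; [exact: hD | rewrite mulrDl addrACA].
  + move=> a [u [m0 [hm ->]]]; exists (- u), (- m0); split; [exact: hN |].
    by rewrite mulNr opprD.
  + move=> s a [u [m0 [hm ->]]]; exists (s * u), (s * m0); split; [exact: hL |].
    by rewrite mulrDr mulrA.
case: (classic (I3 1)) => [[u [m0 [hm e]]]|n1]; last first.
  exfalso; apply: hr0; apply: (hmax I3 hI3 n1) => [y hy|].
    by exists 0, y; rewrite mul0r add0r.
  by exists 1, 0; rewrite mul1r addr0.
move=> r; have -> : (1 - E) * r = (1 - E) * r * (u * (E * r0) + m0) by rewrite -e mulr1.
rewrite mulrDr; apply: hD; last by apply: hL.
have -> : (1 - E) * r * (u * (E * r0)) = ((1 - E) * (r * u) * E) * r0.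
  by rewrite !mulrA.
exact: JR_M.
Qed.

Lemma unit_or_zero a : ~ jacobson a -> ~ central a ->
  PM a \/ exists b, PM (a * b - 1) /\ PM (b * a - 1).
Proof.
move=> hJ hZ; have [p [q [p0 q0 pq hnil]]] := SP hJ hZ.
have [k [m [m0 hk]]] : exists k m, (0 < m)%N /\ nilpotent_elt (a ^+ k * (1 - a ^+ m)).
  case: (ltngtP p q) => hpq; last by rewrite hpq eqxx in pq.
  - exists p, (q - p)%N; split; first by rewrite subn_gt0.
    have := nil_opp hnil; rewrite mulrBr mulr1 -exprD subnKC ?(ltnW hpq) //.
    by rewrite opprB.
  - exists q, (p - q)%N; split; first by rewrite subn_gt0.
    by rewrite mulrBr mulr1 -exprD subnKC ?(ltnW hpq).
case: hk => K hK.
have [c hac e] := pow_form a m0 K.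
pose N := (k * K)%N.
have hN : a ^+ N = a ^+ N * (a * c).
  move: hK; rewrite exprMn_comm; last first.
    by apply: commrB; [exact: commr1 | apply: commrX; apply: commr_sym; apply: commrX; exact: commr_refl].
  rewrite e -exprM mulrBr mulr1 => /subr0_eq.
  by rewrite -/N.
have hE : forall x, jacobson ((1 - (a * c) ^+ N) * x * (a * c) ^+ N).
  move=> x; apply: NJ.
  by exists 1%N; rewrite expr1 -mulrA mulrBl mul1r EE // subrr mulr0.
case: (E_dich hE) => hP.
  left; rewrite -[a]mulr1 -(subrK ((a * c) ^+ N) 1) mulrDr addrC.
  apply: (tiD tidealPM); first exact: (tiL tidealPM).
  by apply: nil_PM; apply: nil_a1E.
right; exists (c * (a * c) ^+ N); split.
  rewrite mulrA zE // -opprB; exact: (tiN tidealPM).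
rewrite -mulrA Ea // mulrA -hac zE // -opprB; exact: (tiN tidealPM).
Qed.

Local Notation Q := (QT tidealPM).
Local Notation pi := (pi tidealPM).

Lemma pi_PM x : PM x -> pi x = 0.
Proof. by move=> h; apply/pi_eq0. Qed.

Lemma inv_pow (u v : Q) n : v * u = 1 -> v ^+ n * u ^+ n = 1.
Proof.
move=> h; elim: n => [|n IH]; first by rewrite !expr0 mulr1.
by rewrite exprSr exprS mulrA -[v ^+ n * v * u]mulrA h mulr1.
Qed.

Lemma Q_tor (X : Q) : (forall Y, X * Y = Y * X) \/ exists2 m, odd m & X ^+ m = 1.
Proof.
have [a ->] := pi_surj X.
have zc : (forall Y : Q, 0 * Y = Y * 0) by move=> Y; rewrite mul0r mulr0.
case: (classic (jacobson a)) => hJ; first by left; rewrite pi_PM //; apply: J_PM.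
case: (classic (central a)) => hZ.
  by left => Y; have [b ->] := pi_surj Y; rewrite -!piM hZ.
case: (unit_or_zero hJ hZ) => [hP|[b [h1 h2]]]; first by left; rewrite pi_PM.
right; have [p [q [p0 q0 pq hnil]]] := SP hJ hZ.
have e : pi a ^+ q = pi a ^+ p.
  by apply/eqP; rewrite -subr_eq0 -!piX -piB; apply/eqP/pi_PM/nil_PM.
have vu : pi b * pi a = 1 by rewrite -piM; apply/eqP; rewrite -subr_eq0 -pi1 -piB; apply/eqP/pi_PM.
case: (ltngtP p q) => hpq; last by rewrite hpq eqxx in pq.
- exists (q - p)%N; first by rewrite oddB ?(ltnW hpq) // addbC; apply/negPf; rewrite eq_sym in pq; move: pq; case: (odd q); case: (odd p).
  rewrite -[_ ^+ (q - p)]mul1r -(inv_pow p vu) -mulrA -exprD subnKC ?(ltnW hpq) //.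
  by rewrite e inv_pow.
- exists (p - q)%N; first by rewrite oddB ?(ltnW hpq) //; move: pq; case: (odd q); case: (odd p).
  rewrite -[_ ^+ (p - q)]mul1r -(inv_pow q vu) -mulrA -exprD subnKC ?(ltnW hpq) //.
  by rewrite -e inv_pow.
Qed.

Lemma Q_dom (X Y : Q) : X * Y = 0 -> X = 0 \/ Y = 0.
Proof.
have [a ->] := pi_surj X; have [b ->] := pi_surj Y.
rewrite -piM => /pi_eq0 hab.
case: (classic (PM a)) => hPa; first by left; apply: pi_PM.
right; apply: pi_PM.
case: (classic (central a)) => hZ.
  case: (hM) => [[h0 hD hN hL] h1 hmax].
  pose K s := M (a * s).
  have hK : left_ideal K.
    split; rewrite /K ?mulr0 //.
    + by move=> s t hs ht; rewrite mulrDr; apply: hD.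
    + by move=> s hs; rewrite mulrN; apply: hN.
    + by move=> t s hs; rewrite mulrA hZ -mulrA; apply: hL.
  have nK1 : ~ K 1.
    by rewrite /K mulr1 => ha; apply: hPa => r; rewrite hZ; apply: hL.
  move=> r; apply: (hmax K hK nK1) => [s hs|]; first by apply: hL.
  by rewrite /K mulrA; apply: hab.
have hJ : ~ jacobson a by move=> hJ; apply: hPa; apply: J_PM.
case: (unit_or_zero hJ hZ) => [//|[c [h1 h2]]].
apply/(pi_eq0 tidealPM).
have vu : pi c * pi a = 1 by rewrite -piM; apply/eqP; rewrite -subr_eq0 -pi1 -piB; apply/eqP/pi_PM.
by rewrite -[pi b]mul1r -vu -mulrA -piM (pi_PM hab) mulr0.
Qed.

Lemma comm_M a b : M (a * b - b * a).
Proof.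
have := core_comm Q_dom Q_tor (pi a) (pi b).
rewrite -!piM => /eqP; rewrite -subr_eq0 -piB => /eqP /pi_eq0 /(_ 1).
by rewrite mulr1.
Qed.
End Main.

Theorem corollary2p17 (R : pzRingType) :
  NJ_symmetric R -> semiperiodic R -> quot_jacobson_commutative R.
Proof. by move=> NJ SP a b M hM; apply: comm_M. Qed.
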